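(* Let $N\in\mathbb N$. The set $$R_J(N)=\{f\in R(N): \exists a\in\mathbb R_{>0},\ \exists b,c\in\mathbb R \text{ such that } \operatorname{supp}(f)\subseteq\{(n,r)\in\mathbb R^2: n\ge ar^2+br+c\}\}$$ is a ring (a subring of $R(N)$).
   Context: $R(N)=\mathbb C[\zeta^{1/N},\zeta^{-1/N}]((q^{1/N}))$ denotes the ring of formal Laurent–Puiseux series $f=\sum_{n,r\in\frac1N\mathbb Z}c(n,r)q^n\zeta^r$ in which, for each $n$, only finitely many $r$ have $c(n,r)\neq0$, and $n$ is bounded below on the set of $(n,r)$ with $c(n,r)\ne 0$; multiplication is the usual multiplication of formal series. The support is $\operatorname{supp}(f)=\{(n,r)\in(\frac1N\mathbb Z)^2: c(n,r)\neq 0\}$. *)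

(* Defs.v *)
From HB Require Import structures.
From mathcomp Require Import all_boot all_order all_algebra.
From mathcomp Require Import all_classical all_reals.
From mathcomp Require Import complex.
Set Implicit Arguments. Unset Strict Implicit. Unset Printing Implicit Defensive.
Import Order.TTheory GRing.Theory Num.Theory.
Local Open Scope ring_scope.
Local Open Scope classical_set_scope.

(* A formal series f = sum c(n,r) q^n zeta^r with n, r in (1/N)Z is encoded by
   its coefficient function: (i, j) : int * int  |->  c(i/N, j/N) in C = R[i]. *)
Definition series (R : realType) := int * int -> R[i].

Definition supp (R : realType) (f : series R) : set (int * int) :=
  [set ij | f ij != 0].

Definition in_RN (R : realType) (f : series R) : Prop :=
  (forall i : int, finite_set [set j : int | f (i, j) != 0]) /\
  (exists m : int, forall ij, ij \in supp f -> m <= ij.1).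

Definition s_zero (R : realType) : series R := fun _ => 0.
Definition s_one (R : realType) : series R :=
  fun ij => if ij == (0%Z, 0%Z) then 1 else 0.
Definition s_add (R : realType) (f g : series R) : series R :=
  fun ij => f ij + g ij.
Definition s_opp (R : realType) (f : series R) : series R :=
  fun ij => - f ij.
(* Cauchy product; for f, g in R(N) the sum has finite support. *)
Definition s_mul (R : realType) (f g : series R) : series R :=
  fun ij => \sum_(kl \in [set: int * int])
              f kl * g (ij.1 - kl.1, ij.2 - kl.2)%R.

Definition in_RJN (R : realType) (N : nat) (f : series R) : Prop :=
  in_RN f /\
  exists a b c : R, 0 < a /\
    forall ij, ij \in supp f ->
      let n := (ij.1)%:~R / N%:R in
      let r := (ij.2)%:~R / N%:R in
      a * r ^+ 2 + b * r + c <= n.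

(* Main.v *)
Require Import Defs.
From HB Require Import structures.
From mathcomp Require Import all_boot all_order all_algebra.
From mathcomp Require Import all_classical all_reals.
From mathcomp Require Import complex.
From mathcomp Require Import ring lra zify.
Import Order.TTheory GRing.Theory Num.Theory.
Local Open Scope ring_scope.
Set Implicit Arguments. Unset Strict Implicit. Unset Printing Implicit Defensive.

Lemma int_bounded_finite (K : nat) : finite_set [set j : int | `|j| < K%:Z].
Proof.
apply: sub_finite_set (finite_image (fun k : 'I_(2*K) => (k:int) - K%:Z) (@finite_finset _ setT)).
move=> j /= hj.
have hk : (absz (j + K%:Z)%R < 2 * K)%N by lia.
exists (Ordinal hk) => //=.
lia.
Qed.

Lemma suppE (R : realType) (f : series R) ij : (ij \in supp f) = (f ij != 0).
Proof. by apply/idP/idP; rewrite in_setE. Qed.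

Lemma quad_lb (R : realType) (a a' b c r : R) : 0 < a -> a' <= a ->
  a' / 2 * r ^+ 2 + (c - b ^+ 2 / (2 * a)) <= a * r ^+ 2 + b * r + c.
Proof.
move=> ha ha'.
set d := b ^+ 2 / (2 * a).
have hd : 2 * a * d = b ^+ 2 by rewrite /d mulrC -mulrA mulVf ?mulr1 // mulf_neq0 // ?gt_eqF.
have h0 : 0 <= (a/2)*r^+2 + b*r + d.
  have e : 2 * a * ((a/2)*r^+2 + b*r + d) = (a*r+b)^+2.
    by rewrite !mulrDr hd; field.
  have : 0 <= 2 * a * ((a/2)*r^+2 + b*r + d) by rewrite e sqr_ge0.
  by rewrite pmulr_rge0 // mulr_gt0.
have : 0 <= r ^+ 2 := sqr_ge0 r.
nra.
Qed.

Definition para (R : realType) (N : nat) (f : series R) (a b c : R) :=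
  forall ij, ij \in supp f ->
      let n := (ij.1)%:~R / N%:R in
      let r := (ij.2)%:~R / N%:R in
      a * r ^+ 2 + b * r + c <= n.

Lemma para_rows (R : realType) (N : nat) (hN : (0 < N)%N) (f : series R) (a b c : R) :
  0 < a -> para N f a b c -> forall i : int, finite_set [set j : int | f (i, j) != 0].
Proof.
move=> ha hp i.
set n : R := i%:~R / N%:R.
set M := n - c + b ^+ 2 / (2 * a).
set x : R := N%:R * (1 + `|2 * M / a|).
have hx : 0 <= x by rewrite mulr_ge0 // addr_ge0.
apply: sub_finite_set (int_bounded_finite (Num.bound x)).
move=> j /= hj.
have hN' : (0 : R) < N%:R by rewrite ltr0n.
have := hp (i, j); rewrite suppE => /(_ hj) /=; rewrite -/n.
set r : R := j%:~R / N%:R => hq.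
have hr2 : r ^+ 2 <= `|2 * M / a|.
  apply: le_trans (ler_norm _).
  have h1 : a / 2 * r ^+ 2 + (c - b ^+ 2 / (2 * a)) <= n.
    by apply: le_trans hq; exact: quad_lb.
  rewrite ler_pdivlMr // /M.
  move: h1; set t := b ^+ 2 / (2 * a); move=> h1.
  have e : a / 2 * r ^+ 2 = (r ^+ 2 * a) / 2 by field.
  rewrite e in h1. lra.
have hur : `|r| <= 1 + r ^+ 2.
  rewrite -real_normK ?num_real //. have := normr_ge0 r. nra.
have hj' : j%:~R = N%:R * r by rewrite /r mulrCA divff ?mulr1 // gt_eqF.
rewrite -(ltr_int R) intr_norm hj' normrM ger0_norm ?ler0n //.
apply: le_lt_trans (archi_boundP hx).
rewrite /x ler_pM2l //. lra.
Qed.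

Lemma mk_RJN (R : realType) (N : nat) (hN : (0 < N)%N) (f : series R) :
  (exists m : int, forall ij, ij \in supp f -> m <= ij.1) ->
  (exists a b c : R, 0 < a /\ para N f a b c) -> in_RJN N f.
Proof.
move=> hm [a [b [c [ha hp]]]]; split; last by exists a, b, c.
by split; last exact: hm; move=> i; exact: (para_rows hN ha hp i).
Qed.

Lemma comb_add (R : realType) (a1 b1 c1 a2 b2 c2 r n : R) : 0 < a1 -> 0 < a2 ->
  (a1 * r ^+ 2 + b1 * r + c1 <= n) \/ (a2 * r ^+ 2 + b2 * r + c2 <= n) ->
  Num.min a1 a2 / 2 * r ^+ 2 + 0 * r
    + - (`|c1 - b1 ^+ 2 / (2 * a1)| + `|c2 - b2 ^+ 2 / (2 * a2)|) <= n.
Proof.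
move=> h1 h2 h.
set C1 := c1 - b1 ^+ 2 / (2 * a1); set C2 := c2 - b2 ^+ 2 / (2 * a2).
have e1 : - C1 <= `|C1| by rewrite -normrN ler_norm.
have e2 : - C2 <= `|C2| by rewrite -normrN ler_norm.
have p1 := normr_ge0 C1; have p2 := normr_ge0 C2.
case: h => h.
- have := quad_lb b1 c1 r h1 (_ : Num.min a1 a2 <= a1); rewrite ge_min lexx => /(_ isT).
  rewrite -/C1; lra.
- have := quad_lb b2 c2 r h2 (_ : Num.min a1 a2 <= a2); rewrite ge_min lexx orbT => /(_ isT).
  rewrite -/C2; lra.
Qed.

Lemma comb_mul (R : realType) (a1 b1 c1 a2 b2 c2 r1 r2 n1 n2 : R) : 0 < a1 -> 0 < a2 ->
  a1 * r1 ^+ 2 + b1 * r1 + c1 <= n1 -> a2 * r2 ^+ 2 + b2 * r2 + c2 <= n2 ->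
  Num.min a1 a2 / 4 * (r1 + r2) ^+ 2 + 0 * (r1 + r2)
    + ((c1 - b1 ^+ 2 / (2 * a1)) + (c2 - b2 ^+ 2 / (2 * a2))) <= n1 + n2.
Proof.
move=> h1 h2 q1 q2.
set C1 := c1 - b1 ^+ 2 / (2 * a1); set C2 := c2 - b2 ^+ 2 / (2 * a2).
set m := Num.min a1 a2.
have hm : 0 < m by rewrite lt_min h1 h2.
have := quad_lb b1 c1 r1 h1 (_ : m <= a1); rewrite ge_min lexx => /(_ isT); rewrite -/C1 -/m => l1.
have := quad_lb b2 c2 r2 h2 (_ : m <= a2); rewrite ge_min lexx orbT => /(_ isT); rewrite -/C2 -/m => l2.
have hs : 0 <= m * (r1 - r2) ^+ 2 by rewrite mulr_ge0 ?sqr_ge0 ?ltW.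
have e : m / 4 * (r1 + r2) ^+ 2 + 0 * (r1 + r2) + (C1 + C2)
   = (m / 2 * r1 ^+ 2 + C1) + (m / 2 * r2 ^+ 2 + C2) - (m * (r1 - r2) ^+ 2) / 4 by field.
rewrite e; lra.
Qed.

Lemma mul_supp (R : realType) (f g : series R) i j : s_mul f g (i, j) != 0 ->
  exists k l, f (k, l) != 0 /\ g (i - k, j - l) != 0.
Proof.
move=> H; have [//|nE] := pselect (exists k l, f (k, l) != 0 /\ g (i - k, j - l) != 0).
exfalso; move: H; rewrite /s_mul fsbig1 ?eqxx // => -[k l] _ /=.
case: (eqVneq (f (k, l)) 0) => [->|fk]; first by rewrite mul0r.
case: (eqVneq (g (i - k, j - l)) 0) => [->|gk]; first by rewrite mulr0.
by exfalso; apply: nE; exists k, l.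
Qed.

Lemma RJ_zero (R : realType) (N : nat) (hN : (0 < N)%N) : in_RJN N (s_zero R).
Proof.
apply: (mk_RJN hN).
  by exists 0 => ij; rewrite suppE /s_zero eqxx.
exists 1, 0, 0; split => // ij; by rewrite suppE /s_zero eqxx.
Qed.

Lemma RJ_one (R : realType) (N : nat) (hN : (0 < N)%N) : in_RJN N (s_one R).
Proof.
apply: (mk_RJN hN).
  by exists 0 => ij; rewrite suppE /s_one; case: ifP => [/eqP -> _|]; last by rewrite eqxx.
exists 1, 0, 0; split => // ij; rewrite suppE /s_one; case: ifP => [/eqP -> _ /=|]; last by rewrite eqxx.
by rewrite !mul0r expr0n /= mulr0 !addr0.
Qed.

Lemma RJ_opp (R : realType) (N : nat) (f : series R) : in_RJN N f -> in_RJN N (s_opp f).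
Proof.
have e : forall ij, (ij \in supp (s_opp f)) = (ij \in supp f).
  by move=> ij; rewrite !suppE /s_opp oppr_eq0.
move=> [[hr [m hm]] [a [b [c [ha hp]]]]]; split.
  split; last by exists m => ij; rewrite e; exact: hm.
  by move=> i; under eq_set do rewrite /s_opp oppr_eq0; exact: hr.
by exists a, b, c; split => // ij; rewrite e; exact: hp.
Qed.

Lemma RJ_add (R : realType) (N : nat) (hN : (0 < N)%N) (f g : series R) :
  in_RJN N f -> in_RJN N g -> in_RJN N (s_add f g).
Proof.
move=> [[_ [m1 hm1]] [a1 [b1 [c1 [ha1 hp1]]]]] [[_ [m2 hm2]] [a2 [b2 [c2 [ha2 hp2]]]]].
have hs : forall ij, ij \in supp (s_add f g) -> ij \in supp f \/ ij \in supp g.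
  move=> ij; rewrite !suppE /s_add.
  case: (eqVneq (f ij) 0) => [->|hf]; last by left.
  by rewrite add0r; right.
apply: (mk_RJN hN).
  exists (Order.min m1 m2) => ij /hs [] h.
    by rewrite ge_min (hm1 ij h).
  by rewrite ge_min (hm2 ij h) orbT.
exists (Num.min a1 a2 / 2), 0,
  (- (`|c1 - b1 ^+ 2 / (2 * a1)| + `|c2 - b2 ^+ 2 / (2 * a2)|)); split.
  by rewrite divr_gt0 // lt_min ha1 ha2.
move=> ij /hs h /=; apply: comb_add => //.
by case: h => h; [left; exact: hp1 | right; exact: hp2].
Qed.

Lemma RJ_mul (R : realType) (N : nat) (hN : (0 < N)%N) (f g : series R) :
  in_RJN N f -> in_RJN N g -> in_RJN N (s_mul f g).
Proof.
move=> [[_ [m1 hm1]] [a1 [b1 [c1 [ha1 hp1]]]]] [[_ [m2 hm2]] [a2 [b2 [c2 [ha2 hp2]]]]].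
have hs : forall i j, (i, j) \in supp (s_mul f g) ->
   exists k l, (k, l) \in supp f /\ (i - k, j - l) \in supp g.
  move=> i j; rewrite suppE => /mul_supp [k [l [h1 h2]]].
  by exists k, l; rewrite !suppE.
apply: (mk_RJN hN).
  exists (m1 + m2) => -[i j] /hs [k [l [h1 h2]]] /=.
  have := hm1 _ h1; have := hm2 _ h2; rewrite /=; lia.
exists (Num.min a1 a2 / 4), 0,
  ((c1 - b1 ^+ 2 / (2 * a1)) + (c2 - b2 ^+ 2 / (2 * a2))); split.
  by rewrite divr_gt0 // lt_min ha1 ha2.
move=> [i j] /hs [k [l [h1 h2]]] /=.
have q1 := hp1 _ h1; have q2 := hp2 _ h2; simpl in q1, q2.
have ei : forall u v : int, u%:~R / N%:R = v%:~R / N%:R + (u - v)%:~R / N%:R :> R.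
  by move=> u v; rewrite -mulrDl -intrD addrC subrK.
rewrite (ei i k) (ei j l); exact: comb_mul.
Qed.

Theorem proposition4p3 (R : realType) (N : nat) (hN : (0 < N)%N) :
  (forall f : series R, in_RJN N f -> in_RN f) /\
  in_RJN N (s_zero R) /\
  in_RJN N (s_one R) /\
  (forall f g : series R, in_RJN N f -> in_RJN N g -> in_RJN N (s_add f g)) /\
  (forall f : series R, in_RJN N f -> in_RJN N (s_opp f)) /\
  (forall f g : series R, in_RJN N f -> in_RJN N g -> in_RJN N (s_mul f g)).
Proof.
split; first by move=> f [].
split; first exact: RJ_zero.
split; first exact: RJ_one.
split; first exact: RJ_add.
split; first exact: RJ_opp.
exact: RJ_mul.
Qed.
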